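(* Let $(y(n))_{n\ge1}$ be a sequence of positive reals and suppose it has Poissonian pair correlation in the sense that for every real-valued $g\in C_c^\infty(\mathbb{R})$, $$\lim_{N\to\infty}\frac1N\sum_{\substack{n_1,n_2\in[N]\\ n_1\neq n_2}}\sum_{k\in\mathbb{Z}} g\big(N(y(n_1)-y(n_2)+k)\big)=\int_{\mathbb{R}} g .$$ Let $f\in C_c^\infty(\mathbb{R})$ be real-valued and define $F(z_1,z_2):=\int_{\mathbb{R}} f(s)f(z_1+z_2+s)f(z_2+s)\,\mathrm{d}s$. Then $$\lim_{N\to\infty}\frac1N\sum^{*}_{\mathbf{n}\in[N]^3}\sum_{\mathbf{k}\in\mathbb{Z}^2}F\big(N(y(n_1)-y(n_2)+k_1),\,N(y(n_2)-y(n_3)+k_2)\big)=\Big(\int_{\mathbb{R}} f\Big)^3$$ holds if and only if $$\lim_{N\to\infty}\mathcal{M}^{(3)}(N)=\mathbf{E}(f)^3+3\,\mathbf{E}(f)\,\mathbf{E}(f^2)+\mathbf{E}(f^3).$$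
   Context: $[N]=\{1,\dots,N\}$; $\sum^*$ denotes summation over triples $\mathbf{n}=(n_1,n_2,n_3)$ with pairwise distinct entries. For $h$ integrable on $\mathbb{R}$, $\mathbf{E}(h):=\int_{\mathbb{R}}h(x)\,\mathrm{d}x$; so $\mathbf{E}(f^j)=\int_{\mathbb{R}} f(x)^j\,\mathrm{d}x$. Define $S_N(s):=\sum_{n\in[N]}\sum_{k\in\mathbb{Z}} f(N(y(n)+k+s))$ and $\mathcal{M}^{(3)}(N):=\int_0^1 S_N(s)^3\,\mathrm{d}s$. *)

(* Defs.v *)
From Stdlib Require Import Reals ZArith Arith.
From Coquelicot Require Import Coquelicot.
Open Scope R_scope.

Definition smooth (f : R -> R) : Prop := forall (n : nat) (x : R), ex_derive_n f n x.
Definition compact_support (f : R -> R) : Prop :=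
  exists M : R, forall x : R, M < Rabs x -> f x = 0.
Definition Cc_infty (f : R -> R) : Prop := smooth f /\ compact_support f.

Definition E (h : R -> R) : R :=
  RInt_gen h (Rbar_locally m_infty) (Rbar_locally p_infty).

(* sum over k in Z (all series considered have finitely many nonzero terms) *)
Definition sumZ (h : Z -> R) : R :=
  Series (fun n : nat => h (Z.of_nat n)) + Series (fun n : nat => h (- Z.of_nat n - 1)%Z).

Definition sumN (N : nat) (h : nat -> R) : R := sum_n_m h 1 N.

Definition pair_sum (N : nat) (h : nat -> nat -> R) : R :=
  sumN N (fun n1 => sumN N (fun n2 => if Nat.eqb n1 n2 then 0 else h n1 n2)).

Definition triple_sum (N : nat) (h : nat -> nat -> nat -> R) : R :=
  sumN N (fun n1 => sumN N (fun n2 => sumN N (fun n3 =>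
    if (Nat.eqb n1 n2 || Nat.eqb n1 n3 || Nat.eqb n2 n3)%bool then 0 else h n1 n2 n3))).

Definition poissonian_pc (y : nat -> R) : Prop :=
  forall g : R -> R, Cc_infty g ->
    is_lim_seq (fun N : nat => / INR N *
      pair_sum N (fun n1 n2 => sumZ (fun k => g (INR N * (y n1 - y n2 + IZR k)))))
      (E g).

Definition Ftriple (f : R -> R) (z1 z2 : R) : R :=
  E (fun s => f s * f (z1 + z2 + s) * f (z2 + s)).

Definition S_N (f : R -> R) (y : nat -> R) (N : nat) (s : R) : R :=
  sumN N (fun n => sumZ (fun k => f (INR N * (y n + IZR k + s)))).

Definition M3 (f : R -> R) (y : nat -> R) (N : nat) : R :=
  RInt (fun s => (S_N f y N s) ^ 3) 0 1.

Definition T3 (f : R -> R) (y : nat -> R) (N : nat) : R :=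
  / INR N * triple_sum N (fun n1 n2 n3 =>
    sumZ (fun k1 => sumZ (fun k2 =>
      Ftriple f (INR N * (y n1 - y n2 + IZR k1)) (INR N * (y n2 - y n3 + IZR k2))))).

(* Main.v *)
Require Import Defs.
From Stdlib Require Import Reals ZArith Arith Lra Lia Classical FunctionalExtensionality.
From Coquelicot Require Import Coquelicot.
Open Scope R_scope.

Lemma sum_n_m_R_plus (u v : nat -> R) n m :
  @eq R (sum_n_m (fun k => u k + v k) n m) (sum_n_m u n m + sum_n_m v n m).
Proof. apply (sum_n_m_plus u v). Qed.

Lemma sum_n_m_R_scal (c : R) (u : nat -> R) n m :
  @eq R (sum_n_m (fun k => c * u k) n m) (c * sum_n_m u n m).
Proof. apply (sum_n_m_mult_l c u). Qed.

Lemma sum_n_m_R_zero n m : @eq R (sum_n_m (fun _ => 0) n m) 0.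
Proof. apply (sum_n_m_const_zero (G:=R_AbelianMonoid)). Qed.

Lemma sum_n_m_R_ext (u v : nat -> R) n m :
  (forall k, (n <= k <= m)%nat -> u k = v k) -> @eq R (sum_n_m u n m) (sum_n_m v n m).
Proof. apply sum_n_m_ext_loc. Qed.

Lemma sum_n_stable (a : nat -> R) K n : (K <= n)%nat ->
  (forall j, (K < j)%nat -> a j = 0) -> @eq R (sum_n a n) (sum_n a K).
Proof.
  intros Hn Ha. induction Hn. reflexivity.
  rewrite sum_Sn, IHHn, Ha by lia. apply (plus_zero_r (G:=R_AbelianMonoid)).
Qed.

Lemma Series_fin (a : nat -> R) K :
  (forall j, (K < j)%nat -> a j = 0) -> Series a = sum_n a K.
Proof.
  intros Ha. apply is_series_unique.
  unfold is_series.
  apply (filterlim_ext_loc (fun _ => sum_n a K)).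
  exists K. intros n Hn. symmetry. apply sum_n_stable; auto.
  apply filterlim_const.
Qed.

Lemma sum_Sn_R (a : nat -> R) n : @eq R (sum_n a (S n)) (sum_n a n + a (S n)).
Proof. exact (sum_Sn (G:=R_AbelianMonoid) a n). Qed.

Lemma sum_O_R (a : nat -> R) : @eq R (sum_n a 0) (a O).
Proof. exact (sum_O (G:=R_AbelianMonoid) a). Qed.

Lemma sum_n_shift (a : nat -> R) m :
  @eq R (sum_n (fun n => a (S n)) m) (sum_n a (S m) - a O).
Proof.
  induction m.
  - rewrite sum_O_R, sum_Sn_R, sum_O_R. ring.
  - rewrite sum_Sn_R, IHm, (sum_Sn_R a (S m)). ring.
Qed.

Lemma sum_n_ext' (u v : nat -> R) n : (forall k, u k = v k) -> @eq R (sum_n u n) (sum_n v n).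
Proof. intros; apply sum_n_ext; auto. Qed.

Definition zbound (K : nat) (h : Z -> R) := forall k, (Z.of_nat K < Z.abs k)%Z -> h k = 0.
Definition fsZ (h : Z -> R) := exists K, zbound K h.
Definition sumZw (K : nat) (h : Z -> R) :=
  sum_n (fun n => h (Z.of_nat n)) K + sum_n (fun n => h (- Z.of_nat n - 1)%Z) K.

Lemma zbound_mono K K' h : (K <= K')%nat -> zbound K h -> zbound K' h.
Proof. intros HK H k Hk. apply H. lia. Qed.

Lemma sumZ_w K h : zbound K h -> sumZ h = sumZw K h.
Proof.
  intros H. unfold sumZ, sumZw. rewrite (Series_fin _ K), (Series_fin _ K). reflexivity.
  - intros j Hj. apply H. lia.
  - intros j Hj. apply H. lia.
Qed.

Lemma sumZ_ext h1 h2 : (forall k, h1 k = h2 k) -> sumZ h1 = sumZ h2.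
Proof. intros H. replace h2 with h1; auto. apply functional_extensionality; auto. Qed.

Lemma sumZ_scal c h : sumZ (fun k => c * h k) = c * sumZ h.
Proof. unfold sumZ. rewrite !Series_scal_l. ring. Qed.

Lemma sumZ_scal_r c h : sumZ (fun k => h k * c) = sumZ h * c.
Proof. rewrite Rmult_comm, <- sumZ_scal. apply sumZ_ext; intros; ring. Qed.

Lemma sumZ_zero : sumZ (fun _ => 0) = 0.
Proof. rewrite (sumZ_w 0). unfold sumZw. rewrite !sum_O_R. ring. intros k _; auto. Qed.

Lemma sumZ_plus h1 h2 : fsZ h1 -> fsZ h2 -> sumZ (fun k => h1 k + h2 k) = sumZ h1 + sumZ h2.
Proof.
  intros [K1 H1] [K2 H2].
  assert (A1 : zbound (max K1 K2) h1) by (eapply zbound_mono; [|eauto]; lia).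
  assert (A2 : zbound (max K1 K2) h2) by (eapply zbound_mono; [|eauto]; lia).
  rewrite (sumZ_w _ _ A1), (sumZ_w _ _ A2), (sumZ_w (max K1 K2)).
  - unfold sumZw. unfold sum_n. rewrite !sum_n_m_R_plus. ring.
  - intros k Hk. rewrite A1, A2; auto. ring.
Qed.


Lemma shift_aux1 K h : zbound K h ->
  sumZw (S K) (fun k => h (k + 1)%Z) = sumZw (S K) h.
Proof.
  intros H. unfold sumZw.
  assert (E0 : sum_n (fun n => h (Z.of_nat n + 1)%Z) (S K) = sum_n (fun m => h (Z.of_nat m)) (S (S K)) - h 0%Z).
  { rewrite <- (sum_n_shift (fun m => h (Z.of_nat m))). apply sum_n_ext'. intros; f_equal; lia. }
  assert (E1 : sum_n (fun n => h (- Z.of_nat n - 1 + 1)%Z) (S K) = h 0%Z + sum_n (fun n => h (- Z.of_nat n - 1)%Z) K).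
  { pose proof (sum_n_shift (fun n => h (- Z.of_nat n)%Z) K) as E.
    rewrite (sum_n_ext' (fun n => h (- Z.of_nat (S n))%Z) (fun n => h (- Z.of_nat n - 1)%Z)) in E
      by (intros; f_equal; lia).
    rewrite (sum_n_ext' _ (fun n => h (- Z.of_nat n)%Z)) by (intros; f_equal; lia).
    replace (- Z.of_nat 0)%Z with 0%Z in E by lia. lra. }
  rewrite E0, E1.
  rewrite (sum_Sn_R (fun m => h (Z.of_nat m)) (S K)).
  rewrite (sum_Sn_R (fun n => h (- Z.of_nat n - 1)%Z) K).
  rewrite (H (Z.of_nat (S (S K)))) by lia.
  rewrite (H (- Z.of_nat (S K) - 1)%Z) by lia.
  lra.
Qed.

Lemma neg_aux K h : zbound K h ->
  sumZw (S K) (fun k => h (- k)%Z) = sumZw (S K) h.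
Proof.
  intros H. unfold sumZw.
  assert (E0 : sum_n (fun n => h (- (- Z.of_nat n - 1))%Z) (S K) = sum_n (fun m => h (Z.of_nat m)) (S (S K)) - h 0%Z).
  { rewrite <- (sum_n_shift (fun m => h (Z.of_nat m))). apply sum_n_ext'. intros; f_equal; lia. }
  assert (E1 : sum_n (fun n => h (- Z.of_nat n)%Z) (S K) = h 0%Z + sum_n (fun n => h (- Z.of_nat n - 1)%Z) K).
  { pose proof (sum_n_shift (fun n => h (- Z.of_nat n)%Z) K) as E.
    rewrite (sum_n_ext' (fun n => h (- Z.of_nat (S n))%Z) (fun n => h (- Z.of_nat n - 1)%Z)) in E
      by (intros; f_equal; lia).
    replace (- Z.of_nat 0)%Z with 0%Z in E by lia. lra. }
  rewrite E0, E1.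
  rewrite (sum_Sn_R (fun m => h (Z.of_nat m)) (S K)).
  rewrite (sum_Sn_R (fun n => h (- Z.of_nat n - 1)%Z) K).
  rewrite (H (Z.of_nat (S (S K)))) by lia.
  rewrite (H (- Z.of_nat (S K) - 1)%Z) by lia.
  lra.
Qed.

Lemma zbound_shift K h m : zbound K h ->
  zbound (K + Z.to_nat (Z.abs m)) (fun k => h (k + m)%Z).
Proof. intros H k Hk. apply H. lia. Qed.

Lemma sumZ_neg h : fsZ h -> sumZ (fun k => h (- k)%Z) = sumZ h.
Proof.
  intros [K H].
  rewrite (sumZ_w (S K) h), (sumZ_w (S K) (fun k => h (-k)%Z)).
  apply neg_aux; auto.
  intros k Hk. apply H. lia.
  eapply zbound_mono; [|eauto]; lia.
Qed.

Lemma sumZ_shift1 h : fsZ h -> sumZ (fun k => h (k + 1)%Z) = sumZ h.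
Proof.
  intros [K H].
  rewrite (sumZ_w (S K) h), (sumZ_w (S K) (fun k => h (k+1)%Z)).
  apply shift_aux1; auto.
  intros k Hk. apply H. lia.
  eapply zbound_mono; [|eauto]; lia.
Qed.

Lemma sumZ_shift_nat h j : fsZ h -> sumZ (fun k => h (k + Z.of_nat j)%Z) = sumZ h.
Proof.
  revert h. induction j; intros h Hh.
  - apply sumZ_ext. intros; f_equal; lia.
  - assert (Hs : fsZ (fun k => h (k + Z.of_nat j)%Z)).
    { destruct Hh as [K H]. eexists. apply zbound_shift. eauto. }
    rewrite <- (IHj h Hh), <- (sumZ_shift1 _ Hs).
    apply sumZ_ext. intros; f_equal; lia.
Qed.

Lemma fsZ_shift h m : fsZ h -> fsZ (fun k => h (k + m)%Z).
Proof. intros [K H]. eexists. apply zbound_shift. eauto. Qed.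

Lemma sumZ_shift h m : fsZ h -> sumZ (fun k => h (k + m)%Z) = sumZ h.
Proof.
  intros Hh. destruct (Z_le_gt_dec 0 m).
  - replace m with (Z.of_nat (Z.to_nat m)) by lia. apply sumZ_shift_nat; auto.
  - pose (h' := fun k => h (k + m)%Z).
    assert (Hh' : fsZ h') by (apply fsZ_shift; auto).
    change (sumZ h' = sumZ h).
    rewrite <- (sumZ_shift_nat h' (Z.to_nat (- m)) Hh').
    apply sumZ_ext. intros k. unfold h'. f_equal. lia.
Qed.

Lemma sumZ_single h k0 : (forall k, k <> k0 -> h k = 0) -> sumZ h = h k0.
Proof.
  intros H.
  assert (Hf : fsZ h).
  { exists (Z.to_nat (Z.abs k0)). intros k Hk. apply H. lia. }
  rewrite <- (sumZ_shift h k0 Hf).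
  rewrite (sumZ_w 0).
  - unfold sumZw. rewrite !sum_O_R. rewrite (H (- Z.of_nat 0 - 1 + k0)%Z) by lia. replace (Z.of_nat 0 + k0)%Z with k0 by lia. ring.
  - intros k Hk. apply H. lia.
Qed.

Lemma sumZ_pow h (phi : R -> R) : phi 0 = 0 ->
  (forall k1 k2, h k1 <> 0 -> h k2 <> 0 -> k1 = k2) ->
  sumZ (fun k => phi (h k)) = phi (sumZ h).
Proof.
  intros H0 Hu.
  destruct (classic (exists k0, h k0 <> 0)) as [[k0 Hk0]|Hn].
  - assert (Hz : forall k, k <> k0 -> h k = 0).
    { intros k Hk. destruct (Req_dec (h k) 0); auto. exfalso. apply Hk. apply Hu; auto. }
    rewrite (sumZ_single h k0 Hz).
    apply (sumZ_single (fun k => phi (h k)) k0). intros k Hk. rewrite Hz; auto.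
  - assert (Hz : forall k, h k = 0).
    { intros k. destruct (Req_dec (h k) 0); auto. exfalso. apply Hn. eauto. }
    rewrite (sumZ_ext _ (fun _ => 0)), (sumZ_ext h (fun _ => 0)), sumZ_zero; auto.
    intros; rewrite Hz; auto.
Qed.


Ltac eqR := match goal with |- @eq _ ?a ?b => change (@eq R a b) end.
Ltac fixR := repeat match goal with
  | |- context [RInt ?f ?a ?b] => let X := fresh "X" in generalize (RInt f a b : R); intro X
  | |- context [E ?f] => let X := fresh "X" in generalize (E f : R); intro X
  end.

Definition contR (F : R -> R) := forall x, continuous F x.

Lemma cont_plus (f g : R -> R) x : continuous f x -> continuous g x -> continuous (fun t => f t + g t) x.
Proof. apply (continuous_plus f g). Qed.
Lemma cont_mult (f g : R -> R) x : continuous f x -> continuous g x -> continuous (fun t => f t * g t) x.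
Proof. apply (continuous_mult f g). Qed.
Lemma cont_opp (f : R -> R) x : continuous f x -> continuous (fun t => - f t) x.
Proof. apply (continuous_opp f). Qed.
Lemma cont_const (c : R) x : continuous (fun _ : R => c) x.
Proof. apply continuous_const. Qed.
Lemma cont_id x : continuous (fun t : R => t) x.
Proof. apply continuous_id. Qed.
Lemma cont_comp (f g : R -> R) x : continuous f x -> continuous g (f x) -> continuous (fun t => g (f t)) x.
Proof. apply continuous_comp. Qed.
Lemma cont_aff (g : R -> R) (u v : R) : contR g -> contR (fun t => g (u * t + v)).
Proof.
  intros Hg x. apply (cont_comp (fun t => u * t + v) g). 2: apply Hg.
  apply cont_plus; [apply cont_mult; [apply cont_const|apply cont_id]|apply cont_const].
Qed.
Lemma contR_ext (F G : R -> R) : (forall x, F x = G x) -> contR F -> contR G.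
Proof. intros H HF. replace G with F; auto. apply functional_extensionality; auto. Qed.

Lemma exR (F : R -> R) a b : contR F -> ex_RInt F a b.
Proof. intros H. apply (ex_RInt_continuous (V:=R_CompleteNormedModule)). intros; apply H. Qed.

Lemma RInt_zero_on F a b : (forall x, Rmin a b < x < Rmax a b -> F x = 0) -> @eq R (RInt F a b) 0.
Proof.
  intros H. rewrite (RInt_ext F (fun _ => 0)) by auto. rewrite RInt_const.
  unfold scal; simpl; unfold mult; simpl. ring.
Qed.

Lemma RInt_Chasles_R (F : R -> R) a b c : contR F -> @eq R (RInt F a b + RInt F b c) (RInt F a c).
Proof. intros H. apply (RInt_Chasles F a b c); apply exR; auto. Qed.

Lemma RInt_plus_R (F G : R -> R) a b : contR F -> contR G ->
  @eq R (RInt (fun t => F t + G t) a b) (RInt F a b + RInt G a b).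
Proof. intros HF HG. apply (RInt_plus F G); apply exR; auto. Qed.

Lemma RInt_scal_R (F : R -> R) c a b : contR F ->
  @eq R (RInt (fun t => c * F t) a b) (c * RInt F a b).
Proof. intros HF. apply (RInt_scal F a b c); apply exR; auto. Qed.

Lemma RInt_win (F : R -> R) a lo hi b : contR F ->
  (forall x, x < lo \/ hi < x -> F x = 0) -> a <= lo -> lo <= hi -> hi <= b ->
  @eq R (RInt F a b) (RInt F lo hi).
Proof.
  intros HF HZ H1 H2 H3.
  rewrite <- (RInt_Chasles_R F a lo b HF), <- (RInt_Chasles_R F lo hi b HF).
  rewrite (RInt_zero_on F a lo), (RInt_zero_on F hi b). ring.
  - intros x Hx. apply HZ. right. rewrite Rmin_left in Hx; lra.
  - intros x Hx. apply HZ. left. rewrite Rmax_right in Hx; lra.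
Qed.

Lemma E_win (F : R -> R) lo hi : contR F ->
  (forall x, x < lo \/ hi < x -> F x = 0) -> lo <= hi -> @eq R (E F) (RInt F lo hi).
Proof.
  intros HF HZ Hlh. unfold E. apply is_RInt_gen_unique.
  unfold is_RInt_gen, filterlimi, filtermapi. intros P HP.
  apply Filter_prod with (fun u => u < lo) (fun v => hi < v).
  - exists lo. auto.
  - exists hi. auto.
  - intros u v Hu Hv. exists (RInt F lo hi). split.
    + simpl. rewrite <- (RInt_win F u lo hi v) by (auto; lra).
      apply RInt_correct. apply exR; auto.
    + apply locally_singleton; auto.
Qed.

Lemma E_scale (g : R -> R) (N a L : R) : 0 < N -> contR g ->
  (forall x, L < Rabs x -> g x = 0) ->
  @eq R (E (fun t => g (N * (a + t)))) (/ N * E g).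
Proof.
  intros HN Hg HL.
  assert (HL0 : forall x, x < - Rabs L \/ Rabs L < x -> g x = 0).
  { intros x Hx. apply HL. revert Hx. unfold Rabs. destruct (Rcase_abs x); destruct (Rcase_abs L); lra. }
  rewrite (E_win g (- Rabs L) (Rabs L)) by (auto; pose proof (Rabs_pos L); lra).
  assert (Hc : contR (fun t => g (N * (a + t)))).
  { apply (contR_ext (fun t => g (N * t + N * a))). intros; f_equal; ring. apply cont_aff; auto. }
  rewrite (E_win _ (- Rabs L / N - a) (Rabs L / N - a)); auto.
  - replace (RInt g (- Rabs L) (Rabs L)) with (RInt g (N * (- Rabs L / N - a) + N * a) (N * (Rabs L / N - a) + N * a))
      by (f_equal; field; lra).
    rewrite <- (RInt_comp_lin g N (N * a)).
    + rewrite (RInt_ext (fun y => scal N (g (N * y + N * a))) (fun y => N * g (N * (a + y)))).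
      * rewrite RInt_scal_R by auto. fixR. field. lra.
      * intros; unfold scal; simpl; unfold mult; simpl. f_equal. f_equal. ring.
    + apply exR; auto.
  - intros x Hx. apply HL0. destruct Hx as [Hx|Hx].
    + left. apply (Rmult_lt_compat_l N) in Hx; auto.
      replace (N * (- Rabs L / N - a)) with (- Rabs L - N * a) in Hx by (field; lra). lra.
    + right. apply (Rmult_lt_compat_l N) in Hx; auto.
      replace (N * (Rabs L / N - a)) with (Rabs L - N * a) in Hx by (field; lra). lra.
  - pose proof (Rabs_pos L). apply Rplus_le_compat_r.
    unfold Rdiv. apply Rmult_le_compat_r. left; apply Rinv_0_lt_compat; auto. lra.
Qed.


Lemma sum_n_Sm_R (a : nat -> R) n m : (n <= S m)%nat -> @eq R (sum_n_m a n (S m)) (sum_n_m a n m + a (S m)).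
Proof. intros; exact (sum_n_Sm (G:=R_AbelianMonoid) a n m H). Qed.
Lemma sum_n_m_zero_R (a : nat -> R) n m : (m < n)%nat -> @eq R (sum_n_m a n m) 0.
Proof. intros; exact (sum_n_m_zero (G:=R_AbelianMonoid) a n m H). Qed.
Lemma sum_n_n_R (a : nat -> R) n : @eq R (sum_n_m a n n) (a n).
Proof. exact (sum_n_n (G:=R_AbelianMonoid) a n). Qed.

Lemma sum_cont_RInt (F : nat -> R -> R) n m a b : (forall i, contR (F i)) ->
  contR (fun t => sum_n_m (fun i => F i t) n m) /\
  @eq R (RInt (fun t => sum_n_m (fun i => F i t) n m) a b) (sum_n_m (fun i => RInt (F i) a b) n m).
Proof.
  intros HF. induction m.
  - destruct n.
    + split.
      * apply (contR_ext (F 0%nat)); auto. intros; rewrite sum_n_n_R; auto.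
      * rewrite sum_n_n_R. apply RInt_ext. intros; rewrite sum_n_n_R; auto.
    + split.
      * apply (contR_ext (fun _ => 0)). intros; rewrite sum_n_m_zero_R; auto; lia. intros x; apply cont_const.
      * rewrite sum_n_m_zero_R by lia. apply RInt_zero_on. intros; apply sum_n_m_zero_R; lia.
  - destruct (le_lt_dec n (S m)) as [Hl|Hl].
    + destruct IHm as [IH1 IH2]. split.
      * apply (contR_ext (fun t => sum_n_m (fun i => F i t) n m + F (S m) t)).
        intros; rewrite sum_n_Sm_R; auto. intros x; apply cont_plus; auto. apply HF.
      * rewrite sum_n_Sm_R by auto.
        rewrite (RInt_ext _ (fun t => sum_n_m (fun i => F i t) n m + F (S m) t)).
        rewrite RInt_plus_R by auto. rewrite IH2. reflexivity.
        intros; rewrite sum_n_Sm_R; auto.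
    + split.
      * apply (contR_ext (fun _ => 0)). intros; rewrite sum_n_m_zero_R; auto; lia. intros x; apply cont_const.
      * rewrite sum_n_m_zero_R by lia. apply RInt_zero_on. intros; apply sum_n_m_zero_R; lia.
Qed.

Lemma sumZw_cont_RInt (H : Z -> R -> R) K a b : (forall k, contR (H k)) ->
  contR (fun t => sumZw K (fun k => H k t)) /\
  @eq R (RInt (fun t => sumZw K (fun k => H k t)) a b) (sumZw K (fun k => RInt (H k) a b)).
Proof.
  intros HH. unfold sumZw, sum_n.
  destruct (sum_cont_RInt (fun n t => H (Z.of_nat n) t) 0 K a b) as [C1 I1]. intros; apply HH.
  destruct (sum_cont_RInt (fun n t => H (- Z.of_nat n - 1)%Z t) 0 K a b) as [C2 I2]. intros; apply HH.
  split.
  - intros x; apply cont_plus; auto.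
  - rewrite RInt_plus_R by auto. rewrite I1, I2. reflexivity.
Qed.

Lemma ball_R (x y e : R) : ball x e y -> Rabs (y - x) < e.
Proof. intros H. exact H. Qed.

Lemma cont_sumZ (H : Z -> R -> R) : (forall k, contR (H k)) ->
  (forall t0, exists K, forall k t, (Z.of_nat K < Z.abs k)%Z -> Rabs (t - t0) < 1 -> H k t = 0) ->
  contR (fun t => sumZ (fun k => H k t)).
Proof.
  intros HH Hb t0. destruct (Hb t0) as [K HK].
  destruct (sumZw_cont_RInt H K 0 0 HH) as [C _].
  apply (continuous_ext_loc _ (fun t => sumZw K (fun k => H k t))); auto.
  exists (mkposreal 1 Rlt_0_1). intros t Ht. symmetry. apply sumZ_w.
  intros k Hk. apply HK; auto.
Qed.

Lemma RInt_sumZ (H : Z -> R -> R) a b K : (forall k, contR (H k)) ->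
  (forall k t, (Z.of_nat K < Z.abs k)%Z -> Rmin a b <= t <= Rmax a b -> H k t = 0) ->
  @eq R (RInt (fun t => sumZ (fun k => H k t)) a b) (sumZ (fun k => RInt (H k) a b)).
Proof.
  intros HH Hb.
  rewrite (RInt_ext _ (fun t => sumZw K (fun k => H k t))).
  - destruct (sumZw_cont_RInt H K a b HH) as [_ I]. rewrite I.
    symmetry. apply sumZ_w. intros k Hk. apply RInt_zero_on. intros; apply Hb; auto; lra.
  - intros x Hx. apply sumZ_w. intros k Hk. apply Hb; auto; lra.
Qed.


Lemma nat_above (r : R) : exists K : nat, r < INR K.
Proof.
  destruct (archimed (Rabs r)) as [H1 _].
  assert (H0 : (0 < up (Rabs r))%Z). { apply lt_0_IZR. pose proof (Rabs_pos r). lra. }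
  exists (Z.to_nat (up (Rabs r))). rewrite INR_IZR_INZ, Z2Nat.id by lia.
  pose proof (Rle_abs r). lra.
Qed.

Lemma zabs_big K k : (Z.of_nat K < Z.abs k)%Z -> INR K + 1 <= Rabs (IZR k).
Proof.
  intros H. rewrite <- abs_IZR. rewrite INR_IZR_INZ, <- plus_IZR. apply IZR_le. lia.
Qed.

Lemma zabs_big' K k : (Z.of_nat K < Z.abs k)%Z -> IZR k <= - INR K - 1 \/ INR K + 1 <= IZR k.
Proof.
  intros H. apply zabs_big in H. revert H. unfold Rabs. destruct (Rcase_abs (IZR k)); lra.
Qed.

Lemma chas_pos (F : R -> R) K : contR F ->
  @eq R (sum_n (G:=R_AbelianMonoid) (fun n => RInt F (INR n) (INR n + 1)) K) (RInt F 0 (INR K + 1)).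
Proof.
  intros HF. induction K.
  - rewrite sum_O_R. simpl INR. replace (0 + 1) with 1 by ring. reflexivity.
  - rewrite sum_Sn_R, IHK, S_INR. apply RInt_Chasles_R; auto.
Qed.

Lemma chas_neg (F : R -> R) K : contR F ->
  @eq R (sum_n (G:=R_AbelianMonoid) (fun n => RInt F (- INR n - 1) (- INR n)) K) (RInt F (- INR K - 1) 0).
Proof.
  intros HF. induction K.
  - rewrite sum_O_R. simpl INR. replace (- 0 - 1) with (-1) by ring. replace (-0) with 0 by ring. reflexivity.
  - rewrite sum_Sn_R, IHK, S_INR. rewrite Rplus_comm.
    replace (- (INR K + 1)) with (- INR K - 1) by ring.
    apply RInt_Chasles_R; auto.
Qed.

Lemma unfold1 (B c : R -> R) (lo hi : R) : contR B -> contR c ->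
  (forall t (m : Z), B (t + IZR m) = B t) ->
  (forall x, x < lo \/ hi < x -> c x = 0) -> lo <= hi ->
  @eq R (RInt (fun s => B s * sumZ (fun k => c (s + IZR k))) 0 1)
        (RInt (fun t => B t * c t) lo hi).
Proof.
  intros HB Hc Hper Hz Hlh.
  set (F := fun t => B t * c t).
  assert (HF : contR F). { intros x; apply cont_mult; auto. }
  destruct (nat_above (Rabs lo + Rabs hi + 1)) as [K HK].
  pose proof (Rle_abs lo). pose proof (Rle_abs hi).
  pose proof (Rabs_pos lo). pose proof (Rabs_pos hi).
  pose proof (Rle_abs (-lo)). rewrite Rabs_Ropp in *.
  rewrite (RInt_ext _ (fun s => sumZ (fun k => B s * c (s + IZR k)))).
  2: { intros; rewrite sumZ_scal; auto. }
  rewrite (RInt_sumZ _ 0 1 K).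
  - rewrite (sumZ_ext _ (fun k => RInt F (IZR k) (IZR k + 1))).
    + rewrite (sumZ_w K).
      * unfold sumZw.
        rewrite (sum_n_ext' _ (fun n => RInt F (INR n) (INR n + 1))).
        2: { intros n. rewrite INR_IZR_INZ. reflexivity. }
        rewrite (sum_n_ext' (fun n => RInt F (IZR (- Z.of_nat n - 1)) (IZR (- Z.of_nat n - 1) + 1))
                   (fun n => RInt F (- INR n - 1) (- INR n))).
        2: { intros n. rewrite minus_IZR, opp_IZR, <- INR_IZR_INZ. f_equal; ring. }
        rewrite chas_pos, chas_neg by auto. rewrite Rplus_comm.
        rewrite RInt_Chasles_R by auto.
        apply (RInt_win F); auto; try lra.
        intros x Hx. unfold F. rewrite Hz; auto; ring.
      * intros k Hk. apply RInt_zero_on. intros x Hx.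
        rewrite Rmin_left in Hx by lra. rewrite Rmax_right in Hx by lra.
        unfold F. rewrite Hz. ring. destruct (zabs_big' K k Hk); lra.
    + intros k.
      transitivity (RInt F (1 * 0 + IZR k) (1 * 1 + IZR k)).
      2: { f_equal; ring. }
      rewrite <- RInt_comp_lin. 2: apply exR; auto.
      apply RInt_ext. intros x _. unfold F, scal; simpl; unfold mult; simpl.
      replace (1 * x + IZR k) with (x + IZR k) by ring. rewrite Hper. ring.
  - intros k x. apply cont_mult; auto.
    apply (cont_comp (fun s => s + IZR k) c). apply cont_plus. apply cont_id. apply cont_const. apply Hc.
  - intros k t Hk Ht. rewrite Rmin_left in Ht by lra. rewrite Rmax_right in Ht by lra.
    rewrite Hz. ring. destruct (zabs_big' K k Hk); lra.
Qed.


Definition goodf (f : R -> R) (M : R) := contR f /\ 0 < M /\ forall x, M < Rabs x -> f x = 0.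

Definition Aa (f : R -> R) (Nr a s : R) := sumZ (fun k => f (Nr * (a + IZR k + s))).

Lemma zfar (a L : R) : exists K, forall k, (Z.of_nat K < Z.abs k)%Z -> L < Rabs (a + IZR k).
Proof.
  destruct (nat_above (Rabs a + Rabs L)) as [K HK]. exists K. intros k Hk.
  apply zabs_big in Hk. pose proof (Rle_abs L).
  pose proof (Rabs_triang_inv (IZR k) (- a)). rewrite Rabs_Ropp in H0.
  replace (IZR k - - a) with (a + IZR k) in H0 by ring. lra.
Qed.

Lemma Rabs_Nr (Nr x : R) : 1 <= Nr -> Rabs x <= Rabs (Nr * x).
Proof.
  intros H. rewrite Rabs_mult, (Rabs_right Nr) by lra.
  pose proof (Rabs_pos x). nra.
Qed.

Lemma kbound f M Nr a c D : goodf f M -> 1 <= Nr ->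
  exists K, forall k t, (Z.of_nat K < Z.abs k)%Z -> Rabs (t - c) <= D -> f (Nr * (a + IZR k + t)) = 0.
Proof.
  intros [Hc [HM Hz]] HN. destruct (zfar (a + c) (M + D)) as [K HK]. exists K.
  intros k t Hk Ht. apply Hz. eapply Rlt_le_trans. 2: apply Rabs_Nr; auto.
  specialize (HK k Hk).
  pose proof (Rabs_triang_inv (a + c + IZR k) (c - t)) as H0.
  replace (a + c + IZR k - (c - t)) with (a + IZR k + t) in H0 by ring.
  rewrite Rabs_minus_sym in H0. lra.
Qed.

Lemma cont_fN f M Nr a : goodf f M -> contR (fun t => f (Nr * (a + t))).
Proof.
  intros Hf. apply (contR_ext (fun t => f (Nr * t + Nr * a))). intros; f_equal; ring.
  apply cont_aff. apply Hf.
Qed.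

Lemma supp_fN f M Nr a : goodf f M -> 1 <= Nr ->
  forall x, x < - a - M \/ - a + M < x -> f (Nr * (a + x)) = 0.
Proof.
  intros [Hc [HM Hz]] HN x Hx. apply Hz. eapply Rlt_le_trans. 2: apply Rabs_Nr; auto.
  unfold Rabs; destruct (Rcase_abs (a + x)); lra.
Qed.

Lemma contA f M Nr a : goodf f M -> 1 <= Nr -> contR (Aa f Nr a).
Proof.
  intros Hf HN. unfold Aa. apply cont_sumZ.
  - intros k. apply (contR_ext (fun t => f (Nr * ((a + IZR k) + t)))). intros; f_equal; ring.
    eapply cont_fN; eauto.
  - intros t0. destruct (kbound f M Nr a t0 1 Hf HN) as [K HK]. exists K.
    intros k t Hk Ht. apply HK; auto. lra.
Qed.

Lemma fsA f M Nr a s : goodf f M -> 1 <= Nr -> fsZ (fun k => f (Nr * (a + IZR k + s))).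
Proof.
  intros Hf HN. destruct (kbound f M Nr a s 0 Hf HN) as [K HK]. exists K.
  intros k Hk. apply HK; auto. rewrite Rminus_diag, Rabs_R0. lra.
Qed.

Lemma perA f M Nr a : goodf f M -> 1 <= Nr -> forall t m, Aa f Nr a (t + IZR m) = Aa f Nr a t.
Proof.
  intros Hf HN t m. unfold Aa.
  rewrite <- (sumZ_shift _ m (fsA f M Nr a t Hf HN)).
  apply sumZ_ext. intros k. f_equal. rewrite plus_IZR. ring.
Qed.

Lemma powA f M Nr a s (phi : R -> R) : goodf f M -> 2 * M < Nr -> phi 0 = 0 ->
  sumZ (fun k => phi (f (Nr * (a + IZR k + s)))) = phi (Aa f Nr a s).
Proof.
  intros [Hc [HM Hz]] HN H0. unfold Aa. apply (sumZ_pow (fun k => f (Nr * (a + IZR k + s))) phi H0).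
  intros k1 k2 H1 H2.
  assert (B1 : Rabs (Nr * (a + IZR k1 + s)) <= M).
  { destruct (Rle_dec (Rabs (Nr * (a + IZR k1 + s))) M); auto. exfalso; apply H1; apply Hz; lra. }
  assert (B2 : Rabs (Nr * (a + IZR k2 + s)) <= M).
  { destruct (Rle_dec (Rabs (Nr * (a + IZR k2 + s))) M); auto. exfalso; apply H2; apply Hz; lra. }
  pose proof (Rabs_triang (Nr * (a + IZR k1 + s)) (- (Nr * (a + IZR k2 + s)))).
  rewrite Rabs_Ropp in H.
  replace (Nr * (a + IZR k1 + s) + - (Nr * (a + IZR k2 + s))) with (Nr * IZR (k1 - k2)) in H
    by (rewrite minus_IZR; ring).
  rewrite Rabs_mult, (Rabs_right Nr) in H by lra.
  destruct (Z.eq_dec k1 k2) as [e|ne]; auto. exfalso.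
  assert (1 <= Rabs (IZR (k1 - k2))).
  { rewrite <- abs_IZR. apply IZR_le. lia. }
  nra.
Qed.


Lemma E_ext (F G : R -> R) : (forall x, F x = G x) -> E F = E G.
Proof. intros H. replace G with F; auto. apply functional_extensionality; auto. Qed.

Lemma cont_pow (F : R -> R) n : contR F -> contR (fun x => F x ^ n).
Proof.
  intros H. induction n.
  - intros x; apply cont_const.
  - intros x. simpl. apply cont_mult; auto.
Qed.

Lemma diagI f M Nr a : goodf f M -> 2 * M < Nr -> 1 <= Nr ->
  @eq R (RInt (fun s => Aa f Nr a s ^ 3) 0 1) (/ Nr * E (fun x => f x ^ 3)).
Proof.
  intros Hf H2 H1. pose proof Hf as [Hc [HM Hz]].
  rewrite (RInt_ext _ (fun s => 1 * sumZ (fun k => (fun t => f (Nr * (a + t)) ^ 3) (s + IZR k)))).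
  2: { intros s _. rewrite <- (powA f M Nr a s (fun x => x ^ 3)) by (try assumption; cbv beta; ring).
       rewrite Rmult_1_l. apply sumZ_ext. intros k. cbv beta. replace (a + (s + IZR k)) with (a + IZR k + s) by ring. reflexivity. }
  rewrite (unfold1 (fun _ => 1) (fun t => f (Nr * (a + t)) ^ 3) (- a - M) (- a + M)).
  - rewrite <- (E_win (fun t => 1 * f (Nr * (a + t)) ^ 3) (- a - M) (- a + M)).
    + transitivity (E (fun t => (fun x => f x ^ 3) (Nr * (a + t)))).
      { apply E_ext. intros t. cbv beta. ring. }
      apply (E_scale (fun x => f x ^ 3) Nr a M).
      * lra.
      * apply cont_pow; auto.
      * intros x Hx. rewrite Hz; auto. ring.
    + intros x. apply cont_mult. apply cont_const. apply (cont_pow (fun t => f (Nr * (a + t)))).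
      eapply cont_fN; eauto.
    + intros x Hx. rewrite (supp_fN f M Nr a Hf H1 x Hx). ring.
    + lra.
  - intros x; apply cont_const.
  - apply cont_pow. eapply cont_fN; eauto.
  - intros; reflexivity.
  - intros x Hx. rewrite (supp_fN f M Nr a Hf H1 x Hx). ring.
  - lra.
Qed.

Definition Gf (f : R -> R) (z : R) := E (fun u => f u ^ 2 * f (u - z)).

Lemma pairI f M Nr a1 a2 : goodf f M -> 2 * M < Nr -> 1 <= Nr ->
  @eq R (RInt (fun s => Aa f Nr a1 s ^ 2 * Aa f Nr a2 s) 0 1)
        (/ Nr * sumZ (fun k => Gf f (Nr * (a1 - a2 + IZR k)))).
Proof.
  intros Hf H2 H1. pose proof Hf as [Hc [HM Hz]].
  rewrite (RInt_ext _ (fun s => (fun s => Aa f Nr a1 s ^ 2) s * sumZ (fun k => (fun t => f (Nr * (a2 + t))) (s + IZR k)))).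
  2: { intros s _. cbv beta. f_equal. unfold Aa. apply sumZ_ext. intros k.
       replace (a2 + (s + IZR k)) with (a2 + IZR k + s) by ring. reflexivity. }
  rewrite (unfold1 (fun s => Aa f Nr a1 s ^ 2) (fun t => f (Nr * (a2 + t))) (- a2 - M) (- a2 + M)).
  2: { apply cont_pow. eapply contA; eauto. }
  2: { eapply cont_fN; eauto. }
  2: { intros t m. cbv beta. rewrite (perA f M); auto. }
  2: { intros x Hx. apply (supp_fN f M Nr a2 Hf H1 x Hx). }
  2: lra.
  rewrite (RInt_ext _ (fun t => sumZ (fun k => f (Nr * (a1 + IZR k + t)) ^ 2 * f (Nr * (a2 + t))))).
  2: { intros t _. rewrite sumZ_scal_r. f_equal.
       symmetry. apply (powA f M Nr a1 t (fun x => x ^ 2)); auto. cbv beta; ring. }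
  destruct (kbound f M Nr a1 (- a2 - M) (2 * M) Hf H1) as [K HK].
  rewrite (RInt_sumZ _ (- a2 - M) (- a2 + M) K).
  - rewrite <- sumZ_scal. apply sumZ_ext. intros k.
    rewrite <- (E_win (fun t => f (Nr * (a1 + IZR k + t)) ^ 2 * f (Nr * (a2 + t))) (- a2 - M) (- a2 + M)).
    + unfold Gf.
      transitivity (E (fun t => (fun u => f u ^ 2 * f (u - Nr * (a1 - a2 + IZR k))) (Nr * ((a1 + IZR k) + t)))).
      { apply E_ext. intros t. cbv beta. replace (Nr * (a1 + IZR k + t) - Nr * (a1 - a2 + IZR k)) with (Nr * (a2 + t)) by ring. reflexivity. }
      apply (E_scale (fun u => f u ^ 2 * f (u - Nr * (a1 - a2 + IZR k))) Nr (a1 + IZR k) M).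
      * lra.
      * intros x. apply cont_mult. apply cont_pow; auto.
        apply (cont_comp (fun u => u - Nr * (a1 - a2 + IZR k)) f). apply cont_plus. apply cont_id. apply cont_const. apply Hc.
      * intros x Hx. rewrite Hz; auto. ring.
    + intros x. apply cont_mult. apply (cont_pow (fun t => f (Nr * (a1 + IZR k + t)))).
      apply (contR_ext (fun t => f (Nr * ((a1 + IZR k) + t)))). intros; f_equal; ring. eapply cont_fN; eauto.
      eapply cont_fN; eauto.
    + intros x Hx. rewrite (supp_fN f M Nr a2 Hf H1 x Hx). ring.
    + lra.
  - intros k x. apply cont_mult. apply (cont_pow (fun t => f (Nr * (a1 + IZR k + t)))).
    apply (contR_ext (fun t => f (Nr * ((a1 + IZR k) + t)))). intros; f_equal; ring. eapply cont_fN; eauto.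
    eapply cont_fN; eauto.
  - intros k t Hk Ht. rewrite Rmin_left in Ht by lra. rewrite Rmax_right in Ht by lra.
    rewrite HK; auto. ring. rewrite Rabs_right; lra.
Qed.

Lemma E_zero (F : R -> R) : (forall x, F x = 0) -> @eq R (E F) 0.
Proof.
  intros H. rewrite (E_ext F (fun _ => 0)) by auto.
  rewrite (E_win (fun _ => 0) 0 0). apply RInt_zero_on; auto.
  intros x; apply cont_const. auto. lra.
Qed.

Lemma Ftriple_zero f M z1 z2 : goodf f M -> 2 * M < Rabs z2 -> Ftriple f z1 z2 = 0.
Proof.
  intros [Hc [HM Hz]] H. unfold Ftriple. apply E_zero. intros s.
  destruct (Rle_dec (Rabs s) M).
  - rewrite (Hz (z2 + s)). ring.
    pose proof (Rabs_triang_inv z2 (- s)). rewrite Rabs_Ropp in H0.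
    replace (z2 - - s) with (z2 + s) in H0 by ring. lra.
  - rewrite Hz. ring. lra.
Qed.

Lemma cont_fNk f M Nr a k : goodf f M -> contR (fun t => f (Nr * (a + IZR k + t))).
Proof.
  intros Hf. apply (contR_ext (fun t => f (Nr * ((a + IZR k) + t)))). intros; f_equal; ring. eapply cont_fN; eauto.
Qed.

Lemma tri_term f M Nr a1 a2 a3 k1 k3 : goodf f M -> 1 <= Nr ->
  @eq R (RInt (fun t => f (Nr * (a1 + IZR k1 + t)) * f (Nr * (a3 + IZR k3 + t)) * f (Nr * (a2 + t))) (- a2 - M) (- a2 + M))
    (/ Nr * Ftriple f (Nr * (a1 - a2 + IZR k1)) (Nr * (a2 - a3 + IZR (- k3)))).
Proof.
  intros Hf H1. pose proof Hf as [Hc [HM Hz]].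
  set (g := fun u => f (u + Nr * (a1 - a2 + IZR k1)) * f (u + Nr * (a3 - a2 + IZR k3)) * f u).
  assert (Hg : contR g).
  { intros x. unfold g. apply cont_mult. apply cont_mult.
    apply (cont_comp (fun u => u + Nr * (a1 - a2 + IZR k1)) f). apply cont_plus. apply cont_id. apply cont_const. apply Hc.
    apply (cont_comp (fun u => u + Nr * (a3 - a2 + IZR k3)) f). apply cont_plus. apply cont_id. apply cont_const. apply Hc.
    apply Hc. }
  assert (Hgz : forall x, M < Rabs x -> g x = 0). { intros x Hx. unfold g. rewrite (Hz x); auto. ring. }
  rewrite <- E_win.
  - transitivity (E (fun t => g (Nr * (a2 + t)))).
    { apply E_ext. intros t. unfold g.
      replace (Nr * (a2 + t) + Nr * (a1 - a2 + IZR k1)) with (Nr * (a1 + IZR k1 + t)) by ring.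
      replace (Nr * (a2 + t) + Nr * (a3 - a2 + IZR k3)) with (Nr * (a3 + IZR k3 + t)) by ring. reflexivity. }
    rewrite (E_scale g Nr a2 M) by (auto; lra). f_equal.
    unfold Ftriple. rewrite <- (Rmult_1_l (E g)), <- Rinv_1.
    rewrite <- (E_scale g 1 (Nr * (a2 - a3 + IZR (- k3))) M) by (auto; lra).
    apply E_ext. intros s. unfold g. rewrite opp_IZR.
    replace (1 * (Nr * (a2 - a3 + - IZR k3) + s) + Nr * (a1 - a2 + IZR k1)) with
      (Nr * (a1 - a2 + IZR k1) + Nr * (a2 - a3 + - IZR k3) + s) by ring.
    replace (1 * (Nr * (a2 - a3 + - IZR k3) + s) + Nr * (a3 - a2 + IZR k3)) with s by ring.
    replace (1 * (Nr * (a2 - a3 + - IZR k3) + s)) with (Nr * (a2 - a3 + - IZR k3) + s) by ring.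
    ring.
  - intros x. apply cont_mult. apply cont_mult. eapply cont_fNk; eauto. eapply cont_fNk; eauto. eapply cont_fN; eauto.
  - intros x Hx. rewrite (supp_fN f M Nr a2 Hf H1 x Hx). ring.
  - lra.
Qed.

Lemma tripleI f M Nr a1 a2 a3 : goodf f M -> 1 <= Nr ->
  @eq R (RInt (fun s => Aa f Nr a1 s * Aa f Nr a2 s * Aa f Nr a3 s) 0 1)
    (/ Nr * sumZ (fun k1 => sumZ (fun k2 =>
        Ftriple f (Nr * (a1 - a2 + IZR k1)) (Nr * (a2 - a3 + IZR k2))))).
Proof.
  intros Hf H1. pose proof Hf as [Hc [HM Hz]].
  rewrite (RInt_ext _ (fun s => (fun s => Aa f Nr a1 s * Aa f Nr a3 s) s * sumZ (fun k => (fun t => f (Nr * (a2 + t))) (s + IZR k)))).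
  2: { intros s _. cbv beta.
       replace (sumZ (fun k => f (Nr * (a2 + (s + IZR k))))) with (Aa f Nr a2 s). eqR. ring.
       unfold Aa. apply sumZ_ext. intros k. replace (a2 + (s + IZR k)) with (a2 + IZR k + s) by ring. reflexivity. }
  rewrite (unfold1 (fun s => Aa f Nr a1 s * Aa f Nr a3 s) (fun t => f (Nr * (a2 + t))) (- a2 - M) (- a2 + M)).
  2: { intros x. apply cont_mult; eapply contA; eauto. }
  2: { eapply cont_fN; eauto. }
  2: { intros t m. cbv beta. rewrite !(perA f M); auto. }
  2: { intros x Hx. apply (supp_fN f M Nr a2 Hf H1 x Hx). }
  2: lra.
  rewrite (RInt_ext _ (fun t => sumZ (fun k1 => f (Nr * (a1 + IZR k1 + t)) * (Aa f Nr a3 t * f (Nr * (a2 + t)))))).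
  2: { intros t _. cbv beta. rewrite sumZ_scal_r. unfold Aa. eqR. ring. }
  destruct (kbound f M Nr a1 (- a2 - M) (2 * M) Hf H1) as [K1 HK1].
  destruct (kbound f M Nr a3 (- a2 - M) (2 * M) Hf H1) as [K3 HK3].
  assert (Hwin : forall t, Rmin (- a2 - M) (- a2 + M) <= t <= Rmax (- a2 - M) (- a2 + M) -> Rabs (t - (- a2 - M)) <= 2 * M).
  { intros t Ht. rewrite Rmin_left in Ht by lra. rewrite Rmax_right in Ht by lra. rewrite Rabs_right; lra. }
  rewrite (RInt_sumZ _ (- a2 - M) (- a2 + M) K1).
  - rewrite <- sumZ_scal. apply sumZ_ext. intros k1.
    rewrite (RInt_ext _ (fun t => sumZ (fun k3 => f (Nr * (a1 + IZR k1 + t)) * f (Nr * (a3 + IZR k3 + t)) * f (Nr * (a2 + t))))).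
    2: { intros t _. unfold Aa. rewrite <- sumZ_scal_r, <- sumZ_scal. apply sumZ_ext. intros; ring. }
    rewrite (RInt_sumZ _ (- a2 - M) (- a2 + M) K3).
    + rewrite (sumZ_ext _ (fun k3 => / Nr * Ftriple f (Nr * (a1 - a2 + IZR k1)) (Nr * (a2 - a3 + IZR (- k3))))).
      2: { intros k3. apply tri_term; auto. }
      rewrite sumZ_scal. f_equal.
      apply (sumZ_neg (fun k2 => Ftriple f (Nr * (a1 - a2 + IZR k1)) (Nr * (a2 - a3 + IZR k2)))).
      destruct (zfar (a2 - a3) (2 * M)) as [K HK]. exists K. intros k Hk.
      apply (Ftriple_zero f M); auto. eapply Rlt_le_trans. apply (HK k Hk). apply Rabs_Nr; auto.
    + intros k3 x. apply cont_mult. apply cont_mult. eapply cont_fNk; eauto. eapply cont_fNk; eauto. eapply cont_fN; eauto.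
    + intros k3 t Hk Ht. rewrite (HK3 k3 t); auto. ring.
  - intros k1 x. apply cont_mult. eapply cont_fNk; eauto. apply cont_mult. eapply contA; eauto. eapply cont_fN; eauto.
  - intros k1 t Hk Ht. rewrite (HK1 k1 t); auto. ring.
Qed.


Lemma sumN_ext N (u v : nat -> R) : (forall k, (1 <= k <= N)%nat -> u k = v k) -> sumN N u = sumN N v.
Proof. intros H. unfold sumN. apply sum_n_m_R_ext. auto. Qed.

Lemma sumN_plus N (u v : nat -> R) : sumN N (fun k => u k + v k) = sumN N u + sumN N v.
Proof. unfold sumN. apply sum_n_m_R_plus. Qed.

Lemma sumN_scal N c (u : nat -> R) : sumN N (fun k => c * u k) = c * sumN N u.
Proof. unfold sumN. apply sum_n_m_R_scal. Qed.

Lemma sumN_scal_r N c (u : nat -> R) : sumN N (fun k => u k * c) = sumN N u * c.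
Proof. rewrite Rmult_comm, <- sumN_scal. apply sumN_ext. intros; ring. Qed.

Lemma sumN_zero N : sumN N (fun _ => 0) = 0.
Proof. unfold sumN. apply sum_n_m_R_zero. Qed.

Lemma sumN_S N (u : nat -> R) : sumN (S N) u = sumN N u + u (S N).
Proof. unfold sumN. apply sum_n_Sm_R. lia. Qed.

Lemma sumN_if N (b : bool) (u : nat -> R) :
  sumN N (fun k => if b then u k else 0) = if b then sumN N u else 0.
Proof. destruct b; auto. apply sumN_zero. Qed.

Lemma sumN_delta N i (u : nat -> R) : (1 <= i <= N)%nat ->
  sumN N (fun j => if Nat.eqb i j then u j else 0) = u i.
Proof.
  induction N; intros Hi. lia.
  rewrite sumN_S. destruct (Nat.eq_dec i (S N)) as [e|ne].
  - subst. rewrite Nat.eqb_refl.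
    rewrite (sumN_ext _ _ (fun _ => 0)), sumN_zero. ring.
    intros k Hk. destruct (Nat.eqb_spec (S N) k); auto. lia.
  - rewrite IHN by lia. destruct (Nat.eqb_spec i (S N)); [lia|ring].
Qed.

Lemma sumN_swap N (h : nat -> nat -> R) :
  sumN N (fun i => sumN N (fun j => h i j)) = sumN N (fun j => sumN N (fun i => h i j)).
Proof.
  assert (G : forall M, sumN M (fun i => sumN N (fun j => h i j)) = sumN N (fun j => sumN M (fun i => h i j))).
  { induction M.
    - unfold sumN at 1. rewrite sum_n_m_zero_R by lia.
      rewrite (sumN_ext _ _ (fun _ => 0)). symmetry; apply sumN_zero.
      intros; unfold sumN; apply sum_n_m_zero_R; lia.
    - rewrite sumN_S, IHM, <- sumN_plus. apply sumN_ext. intros; rewrite sumN_S; auto. }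
  apply G.
Qed.

Lemma cube_point (a : nat -> R) i j l :
  a i * a j * a l =
    (if (Nat.eqb i j || Nat.eqb i l || Nat.eqb j l)%bool then 0 else a i * a j * a l)
  + (if Nat.eqb i j then (if Nat.eqb j l then 0 else a j ^ 2 * a l) else 0)
  + (if Nat.eqb i l then (if Nat.eqb i j then 0 else a i ^ 2 * a j) else 0)
  + (if Nat.eqb j l then (if Nat.eqb i j then 0 else a i * a j ^ 2) else 0)
  + (if Nat.eqb i j then (if Nat.eqb j l then a j ^ 3 else 0) else 0).
Proof.
  destruct (Nat.eqb_spec i j), (Nat.eqb_spec i l), (Nat.eqb_spec j l); simpl; subst; try lia; ring.
Qed.

Lemma cube (a : nat -> R) N :
  sumN N a ^ 3 = triple_sum N (fun i j l => a i * a j * a l)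
    + 3 * pair_sum N (fun i j => a i ^ 2 * a j) + sumN N (fun i => a i ^ 3).
Proof.
  assert (E0 : sumN N a ^ 3 = sumN N (fun i => sumN N (fun j => sumN N (fun l => a i * a j * a l)))).
  { replace (sumN N a ^ 3) with (sumN N a * (sumN N a * sumN N a)) by ring.
    rewrite <- (sumN_scal_r N (sumN N a * sumN N a) a). apply sumN_ext. intros i _.
    rewrite <- (sumN_scal_r N (sumN N a) a). rewrite <- sumN_scal. apply sumN_ext. intros j _.
    replace (a i * (a j * sumN N a)) with ((a i * a j) * sumN N a) by ring.
    rewrite <- sumN_scal. apply sumN_ext. intros; ring. }
  rewrite E0.
  rewrite (sumN_ext _ _ (fun i => sumN N (fun j => sumN N (fun l =>
    (if (Nat.eqb i j || Nat.eqb i l || Nat.eqb j l)%bool then 0 else a i * a j * a l)) +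
    sumN N (fun l => if Nat.eqb i j then (if Nat.eqb j l then 0 else a j ^ 2 * a l) else 0) +
    sumN N (fun l => if Nat.eqb i l then (if Nat.eqb i j then 0 else a i ^ 2 * a j) else 0) +
    sumN N (fun l => if Nat.eqb j l then (if Nat.eqb i j then 0 else a i * a j ^ 2) else 0) +
    sumN N (fun l => if Nat.eqb i j then (if Nat.eqb j l then a j ^ 3 else 0) else 0)))).
  2: { intros i _. apply sumN_ext. intros j _. rewrite <- !sumN_plus. apply sumN_ext. intros l _.
       apply cube_point. }
  rewrite (sumN_ext _ _ (fun i => sumN N (fun j => sumN N (fun l =>
    (if (Nat.eqb i j || Nat.eqb i l || Nat.eqb j l)%bool then 0 else a i * a j * a l))) +
    (sumN N (fun l => if Nat.eqb i l then 0 else a i ^ 2 * a l)) +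
    sumN N (fun j => if Nat.eqb i j then 0 else a i ^ 2 * a j) +
    sumN N (fun j => if Nat.eqb i j then 0 else a i * a j ^ 2) +
    a i ^ 3)).
  2: { intros i Hi. rewrite !sumN_plus. f_equal; [f_equal; [f_equal; [f_equal|]|]|].
       - rewrite (sumN_ext _ _ (fun j => if Nat.eqb i j then sumN N (fun l => if Nat.eqb j l then 0 else a j ^ 2 * a l) else 0)).
         + rewrite (sumN_delta N i (fun j => sumN N (fun l => if Nat.eqb j l then 0 else a j ^ 2 * a l))); auto.
         + intros j _. apply sumN_if.
       - apply sumN_ext. intros j Hj. apply (sumN_delta N i (fun _ => if Nat.eqb i j then 0 else a i ^ 2 * a j)); auto.
       - apply sumN_ext. intros j Hj. apply (sumN_delta N j (fun _ => if Nat.eqb i j then 0 else a i * a j ^ 2)); auto.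
       - rewrite (sumN_ext _ _ (fun j => if Nat.eqb i j then a j ^ 3 else 0)).
         + apply (sumN_delta N i (fun j => a j ^ 3)); auto.
         + intros j Hj. rewrite sumN_if. destruct (Nat.eqb i j); auto.
           apply (sumN_delta N j (fun l => a j ^ 3)); auto. }
  rewrite !sumN_plus. unfold triple_sum, pair_sum.
  assert (Sw : sumN N (fun i => sumN N (fun j => if Nat.eqb i j then 0 else a i * a j ^ 2)) =
               sumN N (fun i => sumN N (fun j => if Nat.eqb i j then 0 else a i ^ 2 * a j))).
  { rewrite sumN_swap. apply sumN_ext. intros i _. apply sumN_ext. intros j _.
    rewrite Nat.eqb_sym. destruct (Nat.eqb i j); [reflexivity|ring]. }
  rewrite Sw. ring.
Qed.


Lemma sumN_RI N (F : nat -> R -> R) a b : (forall i, contR (F i)) ->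
  contR (fun s => sumN N (fun i => F i s)) /\
  @eq R (RInt (fun s => sumN N (fun i => F i s)) a b) (sumN N (fun i => RInt (F i) a b)).
Proof. intros H. unfold sumN. apply sum_cont_RInt. auto. Qed.

Lemma ifRI (b : bool) (F : R -> R) a c : contR F ->
  contR (fun s => if b then 0 else F s) /\
  @eq R (RInt (fun s => if b then 0 else F s) a c) (if b then 0 else RInt F a c).
Proof.
  intros H. destruct b; split; auto.
  - intros x; apply cont_const.
  - apply RInt_zero_on; auto.
Qed.

Lemma pair_RI N (h : nat -> nat -> R -> R) a b : (forall i j, contR (h i j)) ->
  contR (fun s => pair_sum N (fun i j => h i j s)) /\
  @eq R (RInt (fun s => pair_sum N (fun i j => h i j s)) a b) (pair_sum N (fun i j => RInt (h i j) a b)).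
Proof.
  intros H. unfold pair_sum.
  assert (C2 : forall i, contR (fun s => sumN N (fun j => if Nat.eqb i j then 0 else h i j s)) /\
     @eq R (RInt (fun s => sumN N (fun j => if Nat.eqb i j then 0 else h i j s)) a b)
       (sumN N (fun j => if Nat.eqb i j then 0 else RInt (h i j) a b))).
  { intros i. destruct (sumN_RI N (fun j s => if Nat.eqb i j then 0 else h i j s) a b) as [C E1].
    intros j. apply ifRI; auto. split; auto. rewrite E1. apply sumN_ext. intros j _. apply ifRI; auto. }
  destruct (sumN_RI N (fun i s => sumN N (fun j => if Nat.eqb i j then 0 else h i j s)) a b) as [C E1].
  intros i; apply C2. split; auto. rewrite E1. apply sumN_ext. intros i _. apply C2.
Qed.

Lemma triple_RI N (h : nat -> nat -> nat -> R -> R) a b : (forall i j l, contR (h i j l)) ->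
  contR (fun s => triple_sum N (fun i j l => h i j l s)) /\
  @eq R (RInt (fun s => triple_sum N (fun i j l => h i j l s)) a b) (triple_sum N (fun i j l => RInt (h i j l) a b)).
Proof.
  intros H. unfold triple_sum.
  assert (C3 : forall i j, contR (fun s => sumN N (fun l => if (Nat.eqb i j || Nat.eqb i l || Nat.eqb j l)%bool then 0 else h i j l s)) /\
     @eq R (RInt (fun s => sumN N (fun l => if (Nat.eqb i j || Nat.eqb i l || Nat.eqb j l)%bool then 0 else h i j l s)) a b)
       (sumN N (fun l => if (Nat.eqb i j || Nat.eqb i l || Nat.eqb j l)%bool then 0 else RInt (h i j l) a b))).
  { intros i j. destruct (sumN_RI N (fun l s => if (Nat.eqb i j || Nat.eqb i l || Nat.eqb j l)%bool then 0 else h i j l s) a b) as [C E1].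
    intros l. apply ifRI; auto. split; auto. rewrite E1. apply sumN_ext. intros l _. apply ifRI; auto. }
  assert (C2 : forall i, contR (fun s => sumN N (fun j => sumN N (fun l => if (Nat.eqb i j || Nat.eqb i l || Nat.eqb j l)%bool then 0 else h i j l s))) /\
     @eq R (RInt (fun s => sumN N (fun j => sumN N (fun l => if (Nat.eqb i j || Nat.eqb i l || Nat.eqb j l)%bool then 0 else h i j l s))) a b)
       (sumN N (fun j => sumN N (fun l => if (Nat.eqb i j || Nat.eqb i l || Nat.eqb j l)%bool then 0 else RInt (h i j l) a b)))).
  { intros i. destruct (sumN_RI N (fun j s => sumN N (fun l => if (Nat.eqb i j || Nat.eqb i l || Nat.eqb j l)%bool then 0 else h i j l s)) a b) as [C E1].
    intros j. apply C3. split; auto. rewrite E1. apply sumN_ext. intros j _. apply C3. }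
  destruct (sumN_RI N (fun i s => sumN N (fun j => sumN N (fun l => if (Nat.eqb i j || Nat.eqb i l || Nat.eqb j l)%bool then 0 else h i j l s))) a b) as [C E1].
  intros i; apply C2. split; auto. rewrite E1. apply sumN_ext. intros i _. apply C2.
Qed.

Lemma if_scal (b : bool) c x : (if b then 0 else c * x) = c * (if b then 0 else x).
Proof. destruct b; ring. Qed.

Lemma triple_scal N c h : triple_sum N (fun i j l => c * h i j l) = c * triple_sum N h.
Proof.
  unfold triple_sum. rewrite <- sumN_scal. apply sumN_ext; intros i _.
  rewrite <- sumN_scal. apply sumN_ext; intros j _.
  rewrite <- sumN_scal. apply sumN_ext; intros l _. apply if_scal.
Qed.

Lemma pair_scal N c h : pair_sum N (fun i j => c * h i j) = c * pair_sum N h.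
Proof.
  unfold pair_sum. rewrite <- sumN_scal. apply sumN_ext; intros i _.
  rewrite <- sumN_scal. apply sumN_ext; intros j _. apply if_scal.
Qed.

Lemma M3_decomp f M y N : goodf f M -> 1 <= INR N -> 2 * M < INR N ->
  M3 f y N = T3 f y N
    + 3 * (/ INR N * pair_sum N (fun n1 n2 => sumZ (fun k => Gf f (INR N * (y n1 - y n2 + IZR k)))))
    + E (fun x => f x ^ 3).
Proof.
  intros Hf H1 H2. set (Nr := INR N).
  assert (HA : forall i, contR (Aa f Nr (y i))) by (intros; eapply contA; eauto).
  unfold M3.
  rewrite (RInt_ext _ (fun s =>
      triple_sum N (fun i j l => Aa f Nr (y i) s * Aa f Nr (y j) s * Aa f Nr (y l) s)
    + 3 * pair_sum N (fun i j => Aa f Nr (y i) s ^ 2 * Aa f Nr (y j) s)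
    + sumN N (fun i => Aa f Nr (y i) s ^ 3))).
  2: { intros s _. unfold S_N. apply (cube (fun n => Aa f Nr (y n) s) N). }
  destruct (triple_RI N (fun i j l s => Aa f Nr (y i) s * Aa f Nr (y j) s * Aa f Nr (y l) s) 0 1) as [CT IT].
  { intros i j l x. apply cont_mult; [apply cont_mult|]; apply HA. }
  destruct (pair_RI N (fun i j s => Aa f Nr (y i) s ^ 2 * Aa f Nr (y j) s) 0 1) as [CP IP].
  { intros i j x. apply cont_mult. apply cont_pow; apply HA. apply HA. }
  destruct (sumN_RI N (fun i s => Aa f Nr (y i) s ^ 3) 0 1) as [CD ID].
  { intros i. apply cont_pow; apply HA. }
  rewrite RInt_plus_R.
  2: { intros x; apply cont_plus; auto. apply cont_mult; auto. apply cont_const. }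
  2: auto.
  rewrite RInt_plus_R by (auto; intros x; apply cont_mult; auto; apply cont_const).
  rewrite RInt_scal_R by auto.
  rewrite IT, IP, ID.
  rewrite (sumN_ext _ _ (fun _ => / Nr * E (fun x => f x ^ 3))).
  2: { intros i _. apply (diagI f M Nr (y i)); auto. }
  unfold sumN at 1. rewrite sum_n_m_const. replace (S N - 1)%nat with N by lia.
  unfold T3. fold Nr.
  assert (ET : triple_sum N (fun i j l => RInt (fun s => Aa f Nr (y i) s * Aa f Nr (y j) s * Aa f Nr (y l) s) 0 1) =
     triple_sum N (fun i j l => / Nr * sumZ (fun k1 => sumZ (fun k2 =>
        Ftriple f (Nr * (y i - y j + IZR k1)) (Nr * (y j - y l + IZR k2)))))).
  { f_equal. do 3 (apply functional_extensionality; intro). apply tripleI with M; auto. }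
  assert (EP : pair_sum N (fun i j => RInt (fun s => Aa f Nr (y i) s ^ 2 * Aa f Nr (y j) s) 0 1) =
     pair_sum N (fun i j => / Nr * sumZ (fun k => Gf f (Nr * (y i - y j + IZR k))))).
  { f_equal. do 2 (apply functional_extensionality; intro). apply pairI with M; auto. }
  rewrite ET, EP, triple_scal, pair_scal. field. unfold Nr; lra.
Qed.


Definition Gam (f : R -> R) (M : R) (phi : R -> R) (z : R) : R :=
  RInt (fun t => f t ^ 2 * phi (t - z)) (- M) M.

Lemma cont_of_deriv (phi phi' : R -> R) : (forall x, is_derive phi x (phi' x)) -> contR phi.
Proof. intros H x. apply (ex_derive_continuous (K:=R_AbsRing) (V:=R_NormedModule)). exists (phi' x). auto. Qed.

Lemma deriv_inner (phi : R -> R) d v u c : is_derive phi (v - u) d ->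
  is_derive (fun z => c * phi (v - z)) u (- (c * d)).
Proof.
  intros H.
  assert (Hl : is_derive (fun z => v - z) u (-1)).
  { auto_derive. auto. ring. }
  pose proof (is_derive_comp phi (fun z => v - z) u d (-1) H Hl) as Hc.
  apply (is_derive_scal _ _ c) in Hc.
  replace (- (c * d)) with (c * scal (-1) d). exact Hc.
  unfold scal; simpl; unfold mult; simpl. ring.
Qed.

Lemma cpt (g : R -> R) x : continuous g x -> continuity_pt g x.
Proof. intros H. apply continuity_pt_filterlim. exact H. Qed.

Lemma Dparam f M (phi phi' : R -> R) : contR f ->
  (forall x, is_derive phi x (phi' x)) -> contR phi' ->
  forall z, is_derive (Gam f M phi) z (- Gam f M phi' z).
Proof.
  intros Hf Hd Hc' z.
  assert (Hc : contR phi) by (eapply cont_of_deriv; eauto).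
  assert (HD : forall u v, Derive (fun z => f v ^ 2 * phi (v - z)) u = - (f v ^ 2 * phi' (v - u))).
  { intros u v. apply is_derive_unique. apply deriv_inner. auto. }
  unfold Gam.
  replace (- RInt (fun t => f t ^ 2 * phi' (t - z)) (- M) M) with
    (RInt (fun t => Derive (fun u => f t ^ 2 * phi (t - u)) z) (- M) M).
  - apply (is_derive_RInt_param (fun u t => f t ^ 2 * phi (t - u))).
    + apply filter_forall. intros x t _. exists (- (f t ^ 2 * phi' (t - x))). apply deriv_inner; auto.
    + intros t _.
      apply (continuity_2d_pt_ext (fun u v => - (f v ^ 2 * phi' (v - u)))).
      { intros; symmetry; apply HD. }
      apply continuity_2d_pt_opp. apply continuity_2d_pt_mult.
      * apply (continuity_1d_2d_pt_comp (fun x => f x ^ 2) (fun _ v => v)).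
        apply cpt. apply (cont_pow f 2 Hf). apply continuity_2d_pt_id2.
      * apply (continuity_1d_2d_pt_comp phi' (fun u v => v - u)).
        apply cpt. apply Hc'. apply continuity_2d_pt_minus. apply continuity_2d_pt_id2. apply continuity_2d_pt_id1.
    + apply filter_forall. intros y. apply exR. intros x. apply cont_mult. apply (cont_pow f 2 Hf).
      apply (cont_comp (fun t => t - y) phi). apply cont_plus. apply cont_id. apply cont_const. apply Hc.
  - rewrite (RInt_ext _ (fun t => -1 * (f t ^ 2 * phi' (t - z)))).
    + rewrite RInt_scal_R. eqR. fixR. ring.
      intros x. apply cont_mult. apply (cont_pow f 2 Hf).
      apply (cont_comp (fun t => t - z) phi'). apply cont_plus. apply cont_id. apply cont_const. apply Hc'.
    + intros x _. rewrite HD. eqR. ring.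
Qed.

Lemma smooth_cont f : smooth f -> forall n, contR (Derive_n f n).
Proof.
  intros Hs n x. apply (ex_derive_continuous (K:=R_AbsRing) (V:=R_NormedModule)). apply (Hs (S n) x).
Qed.

Lemma smooth_deriv f : smooth f -> forall n x, is_derive (Derive_n f n) x (Derive_n f (S n) x).
Proof. intros Hs n x. apply Derive_correct. apply (Hs (S n) x). Qed.

Lemma Gam_Dn f M g : contR f -> smooth g ->
  forall n, Derive_n (Gam f M g) n = fun z => (-1) ^ n * Gam f M (Derive_n g n) z.
Proof.
  intros Hf Hs. induction n.
  - apply functional_extensionality. intros z. simpl. rewrite Rmult_1_l. reflexivity.
  - apply functional_extensionality. intros z. simpl. rewrite IHn.
    rewrite Derive_scal.
    rewrite (is_derive_unique _ _ _ (Dparam f M (Derive_n g n) (Derive_n g (S n)) Hf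
      (smooth_deriv g Hs n) (smooth_cont g Hs (S n)) z)).
    simpl. ring.
Qed.

Lemma Gam_smooth f M g : contR f -> smooth g -> smooth (Gam f M g).
Proof.
  intros Hf Hs n x. destruct n. exact I.
  simpl. rewrite (Gam_Dn f M g Hf Hs n).
  exists ((-1) ^ n * (- Gam f M (Derive_n g (S n)) x)).
  apply is_derive_scal. apply Dparam; auto. apply smooth_deriv; auto. apply smooth_cont; auto.
Qed.

Lemma Gf_Gam f M : goodf f M -> forall z, Gf f z = Gam f M f z.
Proof.
  intros [Hc [HM Hz]] z. unfold Gf, Gam. apply E_win.
  - intros x. apply cont_mult. apply (cont_pow f 2 Hc).
    apply (cont_comp (fun t => t - z) f). apply cont_plus. apply cont_id. apply cont_const. apply Hc.
  - intros x Hx. rewrite (Hz x). ring. unfold Rabs; destruct (Rcase_abs x); lra.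
  - lra.
Qed.

Lemma Gf_supp f M : goodf f M -> forall z, 2 * M < Rabs z -> Gf f z = 0.
Proof.
  intros [Hc [HM Hz]] z H. unfold Gf. apply E_zero. intros u.
  destruct (Rle_dec (Rabs u) M).
  - rewrite (Hz (u - z)). ring.
    pose proof (Rabs_triang_inv z u). rewrite Rabs_minus_sym. lra.
  - rewrite Hz. ring. lra.
Qed.

Lemma Gf_Cc f M : goodf f M -> smooth f -> Cc_infty (Gf f).
Proof.
  intros Hg Hs. split.
  - replace (Gf f) with (Gam f M f). apply Gam_smooth; auto. apply Hg.
    apply functional_extensionality. intros; symmetry; apply Gf_Gam; auto.
  - exists (2 * M). apply Gf_supp; auto.
Qed.

Lemma Gf_E f M : goodf f M -> smooth f -> E (Gf f) = E f * E (fun x => f x ^ 2).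
Proof.
  intros Hg Hs. pose proof Hg as [Hc [HM Hz]].
  set (Fa := fun w => RInt f (- M) w).
  assert (HFa : forall w, is_derive Fa w (f w)).
  { intros w. apply (is_derive_RInt f Fa (- M)).
    - apply filter_forall. intros b. unfold Fa. apply (RInt_correct (V:=R_CompleteNormedModule)). apply exR; auto.
    - apply Hc. }
  assert (HGd : forall z, is_derive (Gam f M f) z (- Gam f M (Derive_n f 1) z)).
  { intros z. apply Dparam; [auto | intros x; apply (smooth_deriv f Hs 0) | apply smooth_cont; auto]. }
  assert (HGc : contR (Gam f M f)) by (apply (cont_of_deriv _ (fun z => - Gam f M (Derive_n f 1) z)); exact HGd).
  assert (HFd : forall z, is_derive (Gam f M Fa) z (- Gam f M f z)).
  { intros z. apply Dparam; auto. }
  assert (EG : E (Gf f) = RInt (Gam f M f) (- (2 * M)) (2 * M)).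
  { rewrite (E_ext _ (Gam f M f)) by (apply Gf_Gam; auto).
    apply E_win; auto. 2: lra.
    intros x Hx. rewrite <- Gf_Gam by auto. apply (Gf_supp f M); auto.
    unfold Rabs; destruct (Rcase_abs x); lra. }
  assert (EI : RInt (fun z => - Gam f M f z) (- (2 * M)) (2 * M) = Gam f M Fa (2 * M) - Gam f M Fa (- (2 * M))).
  { apply is_RInt_unique. apply (is_RInt_derive (Gam f M Fa) (fun z => - Gam f M f z)).
    - intros; apply HFd.
    - intros x _. apply cont_opp. apply HGc. }
  rewrite (RInt_ext _ (fun z => -1 * Gam f M f z)) in EI by (intros; eqR; ring).
  rewrite RInt_scal_R in EI by auto.
  assert (E1 : Gam f M Fa (- (2 * M)) = E f * E (fun x => f x ^ 2)).
  { unfold Gam.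
    rewrite (RInt_ext _ (fun t => E f * f t ^ 2)).
    - rewrite RInt_scal_R. f_equal. symmetry. apply E_win. apply (cont_pow f 2 Hc).
      intros x Hx. rewrite Hz. ring. unfold Rabs; destruct (Rcase_abs x); lra. lra.
      apply (cont_pow f 2 Hc).
    - intros t Ht. rewrite Rmin_left in Ht by lra. rewrite Rmax_right in Ht by lra.
      unfold Fa. rewrite (E_win f (- M) M); auto.
      rewrite (RInt_win f (- M) (- M) M (t - - (2 * M))); auto.
      eqR. ring.
      intros x Hx. apply Hz. unfold Rabs; destruct (Rcase_abs x); lra.
      lra. lra. lra.
      intros x Hx. apply Hz. unfold Rabs; destruct (Rcase_abs x); lra. lra. }
  assert (E2 : Gam f M Fa (2 * M) = 0).
  { unfold Gam. apply RInt_zero_on. intros t Ht.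
    rewrite Rmin_left in Ht by lra. rewrite Rmax_right in Ht by lra.
    unfold Fa. rewrite RInt_zero_on. ring.
    intros x Hx. apply Hz. rewrite Rmin_right in Hx by lra. rewrite Rmax_left in Hx by lra.
    unfold Rabs; destruct (Rcase_abs x); lra. }
  rewrite EG. rewrite E1, E2 in EI. revert EI. fixR. intros. lra.
Qed.


Theorem mainTheorem2 (y : nat -> R) (f : R -> R)
  (hy : forall n : nat, (1 <= n)%nat -> 0 < y n)
  (hpc : poissonian_pc y)
  (hf : Cc_infty f) :
  is_lim_seq (T3 f y) (E f ^ 3)
  <->
  is_lim_seq (M3 f y)
    (E f ^ 3 + 3 * E f * E (fun x => f x ^ 2) + E (fun x => f x ^ 3)).
Proof.
  destruct hf as [Hs [M0 HM0]].
  set (M := Rabs M0 + 1).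
  assert (Hg : goodf f M).
  { split; [|split].
    - intros x. apply (ex_derive_continuous (K:=R_AbsRing) (V:=R_NormedModule)). apply (Hs 1%nat x).
    - unfold M. pose proof (Rabs_pos M0). lra.
    - intros x Hx. apply HM0. unfold M in Hx. pose proof (Rle_abs M0). lra. }
  set (P := fun N : nat => / INR N * pair_sum N (fun n1 n2 => sumZ (fun k => Gf f (INR N * (y n1 - y n2 + IZR k))))).
  assert (HP : is_lim_seq P (E f * E (fun x => f x ^ 2))).
  { rewrite <- (Gf_E f M Hg Hs). apply hpc. apply (Gf_Cc f M Hg Hs). }
  destruct (nat_above (2 * M + 1)) as [N0 HN0].
  assert (Hev : eventually (fun N => M3 f y N = T3 f y N + 3 * P N + E (fun x => f x ^ 3))).
  { exists N0. intros N HN. apply le_INR in HN. apply (M3_decomp f M y N Hg); unfold M in *; pose proof (Rabs_pos M0); lra. }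
  split; intros H.
  - apply (is_lim_seq_ext_loc (fun N => T3 f y N + 3 * P N + E (fun x => f x ^ 3))).
    { destruct Hev as [N1 HN1]. exists N1. intros; symmetry; auto. }
    replace (E f ^ 3 + 3 * E f * E (fun x => f x ^ 2) + E (fun x => f x ^ 3))
      with (E f ^ 3 + 3 * (E f * E (fun x => f x ^ 2)) + E (fun x => f x ^ 3)) by ring.
    apply is_lim_seq_plus'. apply is_lim_seq_plus'. auto.
    apply (is_lim_seq_scal_l P 3 _ HP). apply is_lim_seq_const.
  - apply (is_lim_seq_ext_loc (fun N => M3 f y N - 3 * P N - E (fun x => f x ^ 3))).
    { destruct Hev as [N1 HN1]. exists N1. intros N HN. rewrite HN1; auto. ring. }
    replace (E f ^ 3) with (E f ^ 3 + 3 * E f * E (fun x => f x ^ 2) + E (fun x => f x ^ 3)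
       - 3 * (E f * E (fun x => f x ^ 2)) - E (fun x => f x ^ 3)) by ring.
    apply is_lim_seq_minus'. apply is_lim_seq_minus'. auto.
    apply (is_lim_seq_scal_l P 3 _ HP). apply is_lim_seq_const.
Qed.
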